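(* Let $E$ be a uniformly random simple $d$-regular graph on $\{1,\dots,N\}$ (identified with its edge set), and, conditionally on $E$, let $(\mathbf S,\mathbf s)=((S_1,\dots,S_d),(s_1,\dots,s_d))$ be uniform over $\mathcal S_1(E)\times\cdots\times\mathcal S_d(E)\times\{1,\dots,8\}^d$. Then $T_{\mathbf S,\mathbf s}(E)$ is a uniformly random simple $d$-regular graph.
   Context: For a set $S$ of edges, $[S]=\bigcup_{e\in S}e$ is its vertex set; for $B\subset\{1,\dots,N\}$, $E|_B=\{e\in E: e\subset B\}$. For each simple $d$-regular $E$, fix an enumeration $e_1(E),\dots,e_d(E)$ of the edges of $E$ incident to vertex $1$, and let $\mathcal S_\mu(E)$ be the set of subsets $S\subset E$ with $|S|=3$, $e_\mu(E)\in S$, and no edge of $S\setminus\{e_\mu(E)\}$ incident to $1$. For $S\subset E$ with $|S|=3$ let $I(E,S)=\mathbf 1\{|[S]|=6,\ E|_{[S]}=S\}$. For a 3-edge set $S$ with $|[S]|=6$, there are eight perfect matchings $S'$ of $[S]$ with $S\cap S'=\emptyset$; fix an enumeration $S'_1,\dots,S'_8$ of them and set $T_{S,s}(E)=(E\setminus S)\cup S'_s$. Given $(\mathbf S,\mathbf s)$ with $S_\mu\in\mathcal S_\mu(E)$, define $I_\mu=I(E,S_\mu)$, $J_\mu=\mathbf 1\{[S_\mu]\cap[S_\nu]=\{1\}\text{ for all }\nu\neq\mu\}$, $W=\{\mu\in\{1,\dots,d\}: I_\mu J_\mu=1\}$, and $T_{\mathbf S,\mathbf s}(E)=(T_{S_{\mu_1},s_{\mu_1}}\circ\cdots\circ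 T_{S_{\mu_k},s_{\mu_k}})(E)$ where $\mu_1,\dots,\mu_k$ enumerates $W$ (this does not depend on the order; equivalently, each $S_\mu$ with $\mu\in W$ is replaced by the corresponding matching $S'_{s_\mu}$ of $[S_\mu]$). *)

(* Defs.v *)
From HB Require Import structures.
From mathcomp Require Import all_boot all_order all_algebra.
Set Implicit Arguments. Unset Strict Implicit. Unset Printing Implicit Defensive.
Import Order.TTheory GRing.Theory Num.Theory.

Section Defs.
Variables (V : finType) (v1 : V) (d : nat).

Notation graph := {set {set V}}.

Definition regular (E : graph) : bool :=
  [forall e in E, #|e| == 2] && [forall v : V, #|[set e in E | v \in e]| == d].

Definition reg_graphs : {set graph} := [set E | regular E].

(* [eE E] is a fixed enumeration e_1(E),...,e_d(E) of the edges of E at v1 *)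
Definition edge_enum_ok (eE : graph -> 'I_d -> {set V}) : Prop :=
  forall E, regular E ->
    injective (eE E) /\ [set eE E mu | mu : 'I_d] = [set e in E | v1 \in e].

Definition Sset (eE : graph -> 'I_d -> {set V}) (E : graph) (mu : 'I_d)
  : {set graph} :=
  [set S : graph | [&& S \subset E, #|S| == 3, eE E mu \in S &
     [forall e in S, (e != eE E mu) ==> (v1 \notin e)]]].

Definition Iind (E S : graph) : bool :=
  (#|cover S| == 6) && ([set e in E | e \subset cover S] == S).

Definition perfect_matching (B : {set V}) (M : graph) : bool :=
  partition M B && [forall e in M, #|e| == 2].

(* [Mt S] is a fixed enumeration S'_1,...,S'_8 of the perfect matchings of [S]
   disjoint from S, for every 3-edge set S with |[S]| = 6 *)
Definition matching_enum_ok (Mt : graph -> 'I_8 -> graph) : Prop :=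
  forall S : graph, #|S| = 3 -> (forall e, e \in S -> #|e| = 2) ->
    #|cover S| = 6 ->
    injective (Mt S) /\
    [set Mt S s | s : 'I_8] =
      [set S' : graph | perfect_matching (cover S) S' & [disjoint S' & S]].

Definition Tstep (Mt : graph -> 'I_8 -> graph) (E S : graph) (s : 'I_8) : graph :=
  (E :\: S) :|: Mt S s.

Definition Jind (S : {ffun 'I_d -> graph}) (mu : 'I_d) : bool :=
  [forall nu : 'I_d, (nu != mu) ==> (cover (S mu) :&: cover (S nu) == [set v1])].

Definition Wset (E : graph) (S : {ffun 'I_d -> graph}) : seq 'I_d :=
  [seq mu <- enum 'I_d | Iind E (S mu) && Jind S mu].

Definition Tfull (Mt : graph -> 'I_8 -> graph) (E : graph)
  (S : {ffun 'I_d -> graph}) (s : {ffun 'I_d -> 'I_8}) : graph :=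
  foldr (fun mu F => Tstep Mt F (S mu) (s mu)) E (Wset E S).

(* P(T_{S,s}(E) = F) where E is uniform over simple d-regular graphs and,
   given E, (S,s) is uniform over S_1(E) x ... x S_d(E) x {1..8}^d *)
Definition prob_T (eE : graph -> 'I_d -> {set V}) (Mt : graph -> 'I_8 -> graph)
  (F : graph) : rat :=
  \sum_(E in reg_graphs)
   \sum_(S : {ffun 'I_d -> graph} | [forall mu, S mu \in Sset eE E mu])
    \sum_(s : {ffun 'I_d -> 'I_8})
      ((#|reg_graphs|%:R)^-1 * (\prod_(mu : 'I_d) (#|Sset eE E mu|%:R))^-1
        * ((8 ^ d)%:R)^-1 * (Tfull Mt E S s == F)%:R)%R.

End Defs.

(* Main.v *)
Require Import Defs.
From HB Require Import structures.
From mathcomp Require Import all_boot all_order all_algebra.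
Import GRing.Theory Num.Theory.
Set Implicit Arguments. Unset Strict Implicit. Unset Printing Implicit Defensive.

Section Gen.
Variable T : finType.

Lemma sub_cover (P : {set {set T}}) e : e \in P -> e \subset cover P.
Proof. by move=> eP; apply: (bigcup_sup e eP). Qed.

Lemma pm_of3 (S : {set {set T}}) :
  #|S| = 3 -> (forall e, e \in S -> #|e| = 2) -> #|cover S| = 6 ->
  perfect_matching (cover S) S.
Proof.
move=> h3 h2 h6; rewrite /perfect_matching /partition eqxx /=.
apply/andP; split; last by apply/forallP=> e; apply/implyP=> /h2 ->.
apply/andP; split.
  rewrite /trivIset h6 (eq_bigr (fun _ => 2)); first by rewrite sum_nat_const h3.
  by move=> e /h2.
by apply/negP=> /h2; rewrite cards0.
Qed.

Lemma pm_cover C (M : {set {set T}}) : perfect_matching C M -> cover M = C.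
Proof. by case/andP=> /and3P[/eqP]. Qed.

Lemma pm_triv C (M : {set {set T}}) : perfect_matching C M -> trivIset M.
Proof. by case/andP=> /and3P[]. Qed.

Lemma pm_edge C (M : {set {set T}}) e : perfect_matching C M -> e \in M -> #|e| = 2.
Proof. by case/andP=> _ /forallP /(_ e) /implyP h /h /eqP. Qed.

Lemma pm_card C (M : {set {set T}}) : perfect_matching C M -> #|M| * 2 = #|C|.
Proof.
move=> pm; have := pm_triv pm; rewrite /trivIset (pm_cover pm) => /eqP <-.
by rewrite (eq_bigr (fun _ => 2)) ?sum_nat_const // => e /(pm_edge pm).
Qed.

Lemma pm_uniq C (M : {set {set T}}) e e' v : perfect_matching C M ->
  e \in M -> e' \in M -> v \in e -> v \in e' -> e = e'.
Proof.
move=> pm eM e'M ve ve'.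
by rewrite -(def_pblock (pm_triv pm) eM ve) (def_pblock (pm_triv pm) e'M ve').
Qed.

Lemma card_sumb (A : {set T}) : #|A| = \sum_(x : T) (x \in A).
Proof. by rewrite -sum1_card big_mkcond /=; apply: eq_bigr => x _; case: (x \in A). Qed.

Lemma pm_deg C (M : {set {set T}}) v : perfect_matching C M ->
  #|[set e in M | v \in e]| = (v \in C).
Proof.
move=> pm; case vC: (v \in C).
  have vc : v \in cover M by rewrite (pm_cover pm).
  rewrite (_ : [set e in M | v \in e] = [set pblock M v]) ?cards1 //.
  apply/setP=> e; rewrite !inE; apply/idP/eqP.
    by case/andP=> eM ve; rewrite (def_pblock (pm_triv pm) eM ve).
  by move=> ->; rewrite pblock_mem // mem_pblock.
apply/eqP; rewrite cards_eq0; apply/eqP/setP=> e; rewrite !inE.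
apply/negP=> /andP[eM ve]; move/negP: vC; apply.
by rewrite -(pm_cover pm); apply: (subsetP (sub_cover eM)).
Qed.

End Gen.

Section Main.
Variables (V : finType) (v1 : V) (d : nat).
Variable eE : {set {set V}} -> 'I_d -> {set V}.
Variable Mt : {set {set V}} -> 'I_8 -> {set {set V}}.
Hypothesis heE : edge_enum_ok v1 eE.
Hypothesis hMt : matching_enum_ok Mt.

Notation graph := {set {set V}}.
Notation fS := {ffun 'I_d -> graph}.
Notation fs := {ffun 'I_d -> 'I_8}.

Definition good (E : graph) (S : fS) :=
  regular d E && [forall mu, S mu \in Sset v1 eE E mu].
Definition inW E (S : fS) mu := Iind E (S mu) && Jind v1 S mu.
Definition Nn E (S : fS) (s : fs) mu :=
  if inW E S mu then Mt (S mu) (s mu) else S mu.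
Definition tt E (S : fS) (s : fs) mu :=
  if inW E S mu then odflt (s mu) [pick t | Mt (Nn E S s mu) t == S mu]
  else s mu.
Definition TT E (S : fS) (s : fs) := Tfull v1 Mt E S s.
Definition sig E (S : fS) (s : fs) nu :=
  odflt nu [pick mu | eE (TT E S s) nu \in Nn E S s mu].
Definition Sst E (S : fS) (s : fs) : fS := [ffun nu => Nn E S s (sig E S s nu)].
Definition sst E (S : fS) (s : fs) : fs := [ffun nu => tt E S s (sig E S s nu)].

Lemma reg_edge (E : graph) e : regular d E -> e \in E -> #|e| = 2.
Proof. by case/andP=> /forallP /(_ e) /implyP h _ /h /eqP. Qed.

Lemma reg_deg (E : graph) v : regular d E -> #|[set e in E | v \in e]| = d.
Proof. by case/andP=> _ /forallP /(_ v) /eqP. Qed.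

Lemma eE_in (G : graph) mu : regular d G -> (eE G mu \in G) && (v1 \in eE G mu).
Proof.
move=> rG; have [_ h] := heE rG.
have h' : eE G mu \in [set eE G mu0 | mu0 : 'I_d] by apply: imset_f.
by move: h'; rewrite h inE.
Qed.

Section Fixed.
Variables (E : graph) (S : fS) (s : fs).
Hypothesis Hg : good E S.

Let Ereg : regular d E. Proof. by case/andP: Hg. Qed.
Let SS mu : S mu \in Sset v1 eE E mu. Proof. by case/andP: Hg => _ /forallP. Qed.

Lemma S_sub mu : S mu \subset E.
Proof. by have := SS mu; rewrite inE => /and4P[]. Qed.
Lemma S_card mu : #|S mu| = 3.
Proof. by have := SS mu; rewrite inE => /and4P[_ /eqP]. Qed.
Lemma S_e mu : eE E mu \in S mu.
Proof. by have := SS mu; rewrite inE => /and4P[]. Qed.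
Lemma S_v1 mu (e : {set V}) : e \in S mu -> e != eE E mu -> v1 \notin e.
Proof.
by have := SS mu; rewrite inE => /and4P[_ _ _ /forallP /(_ e) /implyP h] /h /implyP.
Qed.
Lemma S_edge mu (e : {set V}) : e \in S mu -> #|e| = 2.
Proof. by move=> /(subsetP (S_sub mu)); apply: reg_edge. Qed.

Lemma eE_inj : injective (eE E). Proof. by case: (heE Ereg). Qed.
Lemma eE_img : [set eE E mu | mu : 'I_d] = [set e in E | v1 \in e].
Proof. by case: (heE Ereg). Qed.
Lemma eE_v1 mu : v1 \in eE E mu.
Proof.
have h : eE E mu \in [set eE E mu0 | mu0 : 'I_d] by apply: imset_f.
by move: h; rewrite eE_img inE => /andP[].
Qed.

Lemma S_v1_eq mu (e : {set V}) : e \in S mu -> v1 \in e -> e = eE E mu.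
Proof. by move=> eS ve; apply/eqP; apply: contraLR ve => /(S_v1 eS). Qed.

Lemma sep mu nu (e : {set V}) : Jind v1 S nu -> mu != nu ->
  e \subset cover (S mu) -> e \subset cover (S nu) -> #|e| = 2 -> False.
Proof.
move=> /forallP /(_ mu) /implyP; rewrite eq_sym => h /h /eqP hI e1 e2 c2.
have : e \subset [set v1] by rewrite -hI subsetI e2 e1.
by move/subset_leq_card; rewrite cards1 c2.
Qed.

Lemma inW_I mu : inW E S mu -> Iind E (S mu). Proof. by case/andP. Qed.
Lemma inW_J mu : inW E S mu -> Jind v1 S mu. Proof. by case/andP. Qed.

Lemma inW_6 mu : inW E S mu -> #|cover (S mu)| = 6.
Proof. by move/inW_I/andP=> [/eqP]. Qed.
Lemma inW_res mu : inW E S mu -> [set e in E | e \subset cover (S mu)] = S mu.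
Proof. by move/inW_I/andP=> [_ /eqP]. Qed.

Lemma S_pm mu : inW E S mu -> perfect_matching (cover (S mu)) (S mu).
Proof. by move=> w; apply: pm_of3 (S_card mu) (@S_edge mu) (inW_6 w). Qed.

Lemma Mt_spec mu : inW E S mu ->
  injective (Mt (S mu)) /\
  [set Mt (S mu) t | t : 'I_8] =
      [set S' : graph | perfect_matching (cover (S mu)) S' & [disjoint S' & S mu]].
Proof. by move=> w; apply: hMt (S_card mu) (@S_edge mu) (inW_6 w). Qed.

Lemma N_W mu : inW E S mu -> Nn E S s mu = Mt (S mu) (s mu).
Proof. by rewrite /Nn => ->. Qed.
Lemma N_nW mu : ~~ inW E S mu -> Nn E S s mu = S mu.
Proof. by rewrite /Nn => /negbTE ->. Qed.

Lemma N_pm_disj mu : inW E S mu ->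
  perfect_matching (cover (S mu)) (Nn E S s mu) && [disjoint Nn E S s mu & S mu].
Proof.
move=> w; have [_ h] := Mt_spec w; rewrite N_W //.
have h' : Mt (S mu) (s mu) \in [set Mt (S mu) t | t : 'I_8] by apply: imset_f.
by move: h'; rewrite h inE.
Qed.

Lemma N_cover mu : cover (Nn E S s mu) = cover (S mu).
Proof.
case w: (inW E S mu); last by rewrite N_nW ?w.
by have /andP[/pm_cover] := N_pm_disj w.
Qed.

Lemma N_edge mu (e : {set V}) : e \in Nn E S s mu -> #|e| = 2.
Proof.
case w: (inW E S mu); last by rewrite N_nW ?w //; apply: S_edge.
by have /andP[/pm_edge h _] := N_pm_disj w; apply: h.
Qed.

Lemma N_card mu : #|Nn E S s mu| = 3.
Proof.
case w: (inW E S mu); last by rewrite N_nW ?w // S_card.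
have /andP[/pm_card h _] := N_pm_disj w.
by move: h; rewrite inW_6 //; move/eqP; rewrite -[6]/(3*2) eqn_mul2r /= => /eqP.
Qed.

Lemma N_subC mu (e : {set V}) : e \in Nn E S s mu -> e \subset cover (S mu).
Proof. by rewrite -N_cover; apply: sub_cover. Qed.
Lemma S_subC mu (e : {set V}) : e \in S mu -> e \subset cover (S mu).
Proof. by apply: sub_cover. Qed.

Lemma N_notE mu (e : {set V}) : inW E S mu -> e \in Nn E S s mu -> e \notin E.
Proof.
move=> w eN; apply/negP=> eE'.
have : e \in S mu by rewrite -(inW_res w) inE eE' (N_subC eN).
have /andP[_ dj] := N_pm_disj w.
by rewrite (disjointFr dj eN).
Qed.

Lemma memW mu : (mu \in Wset v1 E S) = inW E S mu.
Proof. by rewrite mem_filter mem_enum andbT. Qed.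

Lemma all_W (p : pred 'I_d) : all p (Wset v1 E S) = [forall mu, inW E S mu ==> p mu].
Proof.
apply/allP/forallP=> h mu.
  by apply/implyP=> w; apply: h; rewrite memW.
by rewrite memW => w; apply: (implyP (h mu) w).
Qed.

Lemma has_W (p : pred 'I_d) : has p (Wset v1 E S) = [exists mu, inW E S mu && p mu].
Proof.
apply/hasP/existsP=> [[mu]|[mu /andP[]]].
  by rewrite memW => w pm; exists mu; rewrite w.
by move=> w pm; exists mu; rewrite ?memW.
Qed.

Lemma sepNS mu nu (e : {set V}) : inW E S nu -> mu != nu ->
  e \in Nn E S s nu -> e \in S mu -> False.
Proof.
move=> w ne eN eS; apply: (sep (inW_J w) ne (S_subC eS) (N_subC eN) (N_edge eN)).
Qed.

Lemma foldr_char (l : seq 'I_d) (e : {set V}) : uniq l -> {subset l <= Wset v1 E S} ->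
  (e \in foldr (fun mu F => Tstep Mt F (S mu) (s mu)) E l) =
  ((e \in E) && all (fun mu => e \notin S mu) l) || has (fun mu => e \in Nn E S s mu) l.
Proof.
elim: l => [|mu l IH] /=; first by rewrite andbT orbF.
move=> /andP[mul ul] sub.
have wmu : inW E S mu by rewrite -memW; apply: sub; rewrite inE eqxx.
have subl : {subset l <= Wset v1 E S} by move=> x xl; apply: sub; rewrite inE xl orbT.
rewrite /Tstep in_setU in_setD IH // -(N_W wmu).
case h: (has _ l).
  have -> : e \notin S mu.
    apply/negP=> eS; case/hasP: h => nu nul eN.
    have wnu : inW E S nu by rewrite -memW; apply: subl.
    have ne : mu != nu by apply: contraNneq mul => ->.
    exact: (sepNS wnu ne eN eS).
  by rewrite !orbT.
by rewrite !orbF; case: (e \in S mu); case: (e \in E); case: (all _ l); case: (e \in Nn E S s mu).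
Qed.

Lemma T_char (e : {set V}) : (e \in TT E S s) =
  ((e \in E) && [forall mu, inW E S mu ==> (e \notin S mu)]) ||
  [exists mu, inW E S mu && (e \in Nn E S s mu)].
Proof.
rewrite /TT /Tfull foldr_char ?all_W ?has_W //.
by rewrite filter_uniq // enum_uniq.
Qed.

Lemma N_sub_T mu : Nn E S s mu \subset TT E S s.
Proof.
apply/subsetP=> e eN; rewrite T_char.
case w: (inW E S mu).
  by apply/orP; right; apply/existsP; exists mu; rewrite w.
move: eN; rewrite N_nW ?w // => eS.
apply/orP; left; rewrite (subsetP (S_sub mu)) //=.
apply/forallP=> nu; apply/implyP=> wnu; apply/negP=> eSn.
have ne : mu != nu by apply: contraFneq w => ->.
exact: (sep (inW_J wnu) ne (S_subC eS) (S_subC eSn) (S_edge eS)).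
Qed.

Lemma T_edge (e : {set V}) : e \in TT E S s -> #|e| = 2.
Proof.
rewrite T_char => /orP[/andP[eE' _]|/existsP[mu /andP[_ eN]]].
  by apply: reg_edge Ereg eE'.
exact: N_edge eN.
Qed.

Definition P0 (e : {set V}) := (e \in E) && [forall mu, inW E S mu ==> (e \notin S mu)].

Lemma indT (e : {set V}) : ((e \in TT E S s) : nat) =
  P0 e + \sum_(mu | inW E S mu) ((e \in Nn E S s mu) : nat).
Proof.
case: (boolP [exists mu, inW E S mu && (e \in Nn E S s mu)]).
  move=> /existsP[mu /andP[w eN]].
  have eT : e \in TT E S s by rewrite T_char; apply/orP; right; apply/existsP; exists mu; rewrite w.
  have -> : P0 e = false by rewrite /P0 (negbTE (N_notE w eN)).
  rewrite eT (bigD1 mu) //= eN big1 // => nu /andP[wnu nnu].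
  have -> // : (e \in Nn E S s nu) = false.
  apply/negP=> eNn; rewrite eq_sym in nnu.
  exact: (sep (inW_J wnu) nnu (N_subC eN) (N_subC eNn) (N_edge eN)).
move=> hn; rewrite T_char (negbTE hn) orbF big1 ?addn0 // => nu wnu.
have -> // : (e \in Nn E S s nu) = false.
by apply: contraNF hn => eN; apply/existsP; exists nu; rewrite wnu.
Qed.

Lemma indE (e : {set V}) : ((e \in E) : nat) =
  P0 e + \sum_(mu | inW E S mu) ((e \in S mu) : nat).
Proof.
case: (boolP [exists mu, inW E S mu && (e \in S mu)]).
  move=> /existsP[mu /andP[w eS]].
  have -> : P0 e = false.
    by rewrite /P0; apply/negbTE; rewrite negb_and; apply/orP; right;
       apply/forallPn; exists mu; rewrite w eS.
  rewrite (subsetP (S_sub mu)) // (bigD1 mu) //= eS big1 // => nu /andP[wnu nnu].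
  have -> // : (e \in S nu) = false.
  apply/negP=> eSn; rewrite eq_sym in nnu.
  exact: (sep (inW_J wnu) nnu (S_subC eS) (S_subC eSn) (S_edge eS)).
move=> hn; rewrite big1 ?addn0.
  have hf : [forall mu, inW E S mu ==> (e \notin S mu)].
    apply/forallP=> mu; apply/implyP=> w.
    by apply: contraNN hn => eS; apply/existsP; exists mu; rewrite w.
  by rewrite /P0 hf andbT.
move=> nu wnu; have -> // : (e \in S nu) = false.
by apply: contraNF hn => eS; apply/existsP; exists nu; rewrite wnu.
Qed.

Lemma deg_sum (A : {set {set V}}) v :
  #|[set e in A | v \in e]| = \sum_(e : {set V}) ((e \in A) * (v \in e)).
Proof. by rewrite (card_sumb [set e in A | v \in e]); apply: eq_bigr => e _; rewrite inE mulnb. Qed.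

Lemma deg_split (A : {set {set V}}) (B : 'I_d -> {set {set V}}) v :
  (forall e : {set V}, ((e \in A) : nat) = P0 e + \sum_(mu | inW E S mu) ((e \in B mu) : nat)) ->
  #|[set e in A | v \in e]| = \sum_(e : {set V}) (P0 e * (v \in e)) +
     \sum_(mu | inW E S mu) #|[set e in B mu | v \in e]|.
Proof.
move=> h; rewrite deg_sum (eq_bigr (fun e => (P0 e + \sum_(mu | inW E S mu) ((e \in B mu) : nat)) * (v \in e))); last by move=> e _; rewrite -h.
under eq_bigr => e _ do rewrite mulnDl.
rewrite big_split /=; congr (_ + _).
under eq_bigr => e _ do rewrite big_distrl /=.
rewrite exchange_big /=.
by apply: eq_bigr => mu _; rewrite deg_sum.
Qed.

Lemma T_reg : regular d (TT E S s).
Proof.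
apply/andP; split; first by apply/forallP=> e; apply/implyP=> /T_edge ->.
apply/forallP=> v; rewrite (deg_split v indT); have := reg_deg v Ereg.
rewrite (deg_split v indE) => hd; apply/eqP; apply: etrans hd; congr (_ + _); apply: eq_bigr => mu w.
have /andP[pmN _] := N_pm_disj w.
by rewrite (pm_deg v pmN) (pm_deg v (S_pm w)).
Qed.
Lemma T_v1_ex (e : {set V}) : e \in TT E S s -> v1 \in e -> exists mu, e \in Nn E S s mu.
Proof.
rewrite T_char => /orP[/andP[eE' hf] ve|/existsP[mu /andP[_ eN]] _]; last by exists mu.
have : e \in [set e in E | v1 \in e] by rewrite inE eE' ve.
rewrite -eE_img => /imsetP[mu _ he]; subst e; exists mu.
have w : ~~ inW E S mu.
  by apply/negP=> w; move: (implyP (forallP hf mu) w); rewrite S_e.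
by rewrite N_nW // S_e.
Qed.

Lemma N_v1_uniq mu mu' (e : {set V}) : v1 \in e ->
  e \in Nn E S s mu -> e \in Nn E S s mu' -> mu = mu'.
Proof.
move=> ve eN eN'; case: (eqVneq mu mu') => // ne; exfalso.
case wm: (inW E S mu).
  have ne' : mu' != mu by rewrite eq_sym.
  exact: (sep (inW_J wm) ne' (N_subC eN') (N_subC eN) (N_edge eN)).
case wm': (inW E S mu').
  exact: (sep (inW_J wm') ne (N_subC eN) (N_subC eN') (N_edge eN)).
move: eN eN'; rewrite !N_nW ?wm ?wm' // => eS eS'.
move/negP: ne; apply; apply/eqP; apply: eE_inj.
by rewrite -(S_v1_eq eS ve) -(S_v1_eq eS' ve).
Qed.

Lemma N_v1_uniq1 mu (e e' : {set V}) : e \in Nn E S s mu -> e' \in Nn E S s mu ->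
  v1 \in e -> v1 \in e' -> e = e'.
Proof.
case w: (inW E S mu).
  by have /andP[pmN _] := N_pm_disj w; apply: pm_uniq pmN.
rewrite !N_nW ?w // => eS eS' ve ve'.
by rewrite (S_v1_eq eS ve) (S_v1_eq eS' ve').
Qed.

Lemma sig_spec nu : eE (TT E S s) nu \in Nn E S s (sig E S s nu).
Proof.
rewrite /sig; case: pickP => [mu h|h] //=; exfalso.
have /andP[eT ve] := eE_in nu T_reg.
by have [mu eN] := T_v1_ex eT ve; move: (h mu); rewrite eN.
Qed.

Lemma sig_eq nu mu : eE (TT E S s) nu \in Nn E S s mu -> sig E S s nu = mu.
Proof.
move=> h; have /andP[_ ve] := eE_in nu T_reg.
exact: (N_v1_uniq ve (sig_spec nu) h).
Qed.

Lemma sig_inj : injective (sig E S s).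
Proof.
move=> nu nu' h.
have [inj _] := heE T_reg; apply: inj.
have /andP[_ ve] := eE_in nu T_reg; have /andP[_ ve'] := eE_in nu' T_reg.
have h2 := sig_spec nu'; rewrite -h in h2.
exact: (N_v1_uniq1 (sig_spec nu) h2 ve ve').
Qed.

Lemma Sst_good : good (TT E S s) (Sst E S s).
Proof.
apply/andP; split; first exact: T_reg.
apply/forallP=> nu; rewrite ffunE inE N_sub_T N_card eqxx sig_spec /=.
apply/forallP=> e; apply/implyP=> eN; apply/implyP=> ne; apply/negP=> ve.
have /andP[_ ve'] := eE_in nu T_reg.
by move/negP: ne; apply; apply/eqP; apply: (N_v1_uniq1 eN (sig_spec nu) ve ve').
Qed.
Lemma F_res mu (e : {set V}) : e \subset cover (S mu) ->
  (e \in TT E S s) = (if inW E S mu then e \in Nn E S s mu else e \in E).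
Proof.
move=> hC; case w: (inW E S mu); apply/idP/idP.
- rewrite T_char => /orP[/andP[eE' hf]|/existsP[nu /andP[wnu eN]]].
    have : e \in S mu by rewrite -(inW_res w) inE eE' hC.
    by move: (implyP (forallP hf mu) w) => /negP.
  case: (eqVneq mu nu) => [-> //|ne]; exfalso.
  exact: (sep (inW_J wnu) ne hC (N_subC eN) (N_edge eN)).
- by apply: (subsetP (N_sub_T mu)).
- rewrite T_char => /orP[/andP[eE' _] //|/existsP[nu /andP[wnu eN]]].
  have ne : mu != nu by apply: contraFneq w => ->.
  by exfalso; exact: (sep (inW_J wnu) ne hC (N_subC eN) (N_edge eN)).
- move=> eE'; rewrite T_char eE' /=; apply/orP; left.
  apply/forallP=> nu; apply/implyP=> wnu; apply/negP=> eS.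
  have ne : mu != nu by apply: contraFneq w => ->.
  exact: (sep (inW_J wnu) ne hC (S_subC eS) (reg_edge Ereg eE')).
Qed.

Lemma I_second mu : Iind (TT E S s) (Nn E S s mu) = Iind E (S mu).
Proof.
rewrite /Iind N_cover; case w: (inW E S mu).
  have /andP[-> /eqP ->] := inW_I w; rewrite eqxx /=; apply/eqP/setP=> e.
  rewrite inE; case hC: (e \subset cover (S mu)); first by rewrite (F_res hC) w andbT.
  by rewrite andbF; apply/esym/negP=> /N_subC; rewrite hC.
rewrite N_nW ?w //; congr (_ && (_ == _)); apply/setP=> e; rewrite !inE.
case hC: (e \subset cover (S mu)); last by rewrite !andbF.
by rewrite (F_res hC) w.
Qed.

Lemma forall_bij (f : 'I_d -> 'I_d) (P : pred 'I_d) : bijective f ->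
  [forall x, P (f x)] = [forall x, P x].
Proof.
case=> g fg gf; apply/forallP/forallP=> h x; last exact: h.
by rewrite -(gf x); apply: h.
Qed.

Lemma exists_bij (f : 'I_d -> 'I_d) (P : pred 'I_d) : bijective f ->
  [exists x, P (f x)] = [exists x, P x].
Proof.
case=> g fg gf; apply/existsP/existsP=> [[x h]|[x h]]; first by exists (f x).
by exists (g x); rewrite gf.
Qed.

Lemma sig_bij : bijective (sig E S s).
Proof. exact: injF_bij sig_inj. Qed.

Lemma J_second nu : Jind v1 (Sst E S s) nu = Jind v1 S (sig E S s nu).
Proof.
rewrite /Jind.
rewrite -(forall_bij (fun x => (x != sig E S s nu) ==> (cover (S (sig E S s nu)) :&: cover (S x) == [set v1])) sig_bij).
apply: eq_forallb => x; rewrite !ffunE !N_cover (inj_eq sig_inj).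
by [].
Qed.

Lemma inW_second nu : inW (TT E S s) (Sst E S s) nu = inW E S (sig E S s nu).
Proof. by rewrite /inW J_second ffunE I_second. Qed.

Lemma Mt_t mu : inW E S mu -> Mt (Nn E S s mu) (tt E S s mu) = S mu.
Proof.
move=> w; rewrite /tt w; case: pickP => [t /eqP //|h]; exfalso.
have h6 : #|cover (Nn E S s mu)| = 6 by rewrite N_cover; exact: inW_6 w.
have [_ himg] := hMt (N_card mu) (@N_edge mu) h6.
have : S mu \in [set Mt (Nn E S s mu) t | t : 'I_8].
  rewrite himg inE N_cover S_pm //=; rewrite disjoint_sym.
  by have /andP[_ ->] := N_pm_disj w.
by case/imsetP=> t _ ht; move: (h t); rewrite ht eqxx.
Qed.

Lemma N_second nu : Nn (TT E S s) (Sst E S s) (sst E S s) nu = S (sig E S s nu).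
Proof.
rewrite /Nn inW_second !ffunE; case w: (inW E S (sig E S s nu)); first exact: Mt_t.
by rewrite N_nW ?w.
Qed.

Lemma t_second nu : tt (TT E S s) (Sst E S s) (sst E S s) nu = s (sig E S s nu).
Proof.
rewrite /tt inW_second N_second !ffunE; case w: (inW E S (sig E S s nu)).
  rewrite N_W //; case: pickP => [t /eqP h|h] /=.
    by have [inj _] := Mt_spec w; apply: inj.
  by move: (h (s (sig E S s nu))); rewrite eqxx.
by rewrite /tt w.
Qed.
End Fixed.
Section Second.
Variables (E : graph) (S : fS) (s : fs).
Hypothesis Hg : good E S.

Lemma T_second : TT (TT E S s) (Sst E S s) (sst E S s) = E.
Proof.
apply/setP=> e; rewrite (T_char (sst E S s) (Sst_good s Hg)).
have hf : [forall nu, inW (TT E S s) (Sst E S s) nu ==> (e \notin Sst E S s nu)] =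
          [forall mu, inW E S mu ==> (e \notin Nn E S s mu)].
  rewrite -(forall_bij (fun mu => inW E S mu ==> (e \notin Nn E S s mu)) (sig_bij s Hg)).
  by apply: eq_forallb => nu; rewrite (inW_second s Hg) ffunE.
have he : [exists nu, inW (TT E S s) (Sst E S s) nu &&
             (e \in Nn (TT E S s) (Sst E S s) (sst E S s) nu)] =
          [exists mu, inW E S mu && (e \in S mu)].
  rewrite -(exists_bij (fun mu => inW E S mu && (e \in S mu)) (sig_bij s Hg)).
  by apply: eq_existsb => nu; rewrite (inW_second s Hg) (N_second s Hg).
rewrite hf he.
case: (boolP [exists mu, inW E S mu && (e \in S mu)]) => [/existsP[mu /andP[w eS]]|hn].
  by rewrite orbT (subsetP (S_sub Hg mu)).
rewrite orbF; apply/idP/idP.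
  move=> /andP[eF hf']; move: eF; rewrite (T_char s Hg) => /orP[/andP[] //|].
  move=> /existsP[mu /andP[w eN]]; move: (implyP (forallP hf' mu) w).
  by rewrite eN.
move=> eE'.
have hS : [forall mu, inW E S mu ==> (e \notin S mu)].
  apply/forallP=> mu; apply/implyP=> w.
  by apply: contraNN hn => eS; apply/existsP; exists mu; rewrite w.
rewrite (T_char s Hg) eE' hS /=.
apply/forallP=> mu; apply/implyP=> w; apply/negP=> eN.
by move: (N_notE (s:=s) Hg w eN); rewrite eE'.
Qed.

Lemma sig2 mu : sig E S s (sig (TT E S s) (Sst E S s) (sst E S s) mu) = mu.
Proof.
have h := sig_spec (sst E S s) (Sst_good s Hg) mu.
rewrite T_second (N_second s Hg) in h.
have /andP[_ ve] := eE_in mu (proj1 (andP Hg)).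
apply: (eE_inj Hg); apply/esym; exact: (S_v1_eq Hg h ve).
Qed.

Lemma Sst2 : Sst (TT E S s) (Sst E S s) (sst E S s) = S.
Proof. by apply/ffunP=> mu; rewrite ffunE (N_second s Hg) sig2. Qed.

Lemma sst2 : sst (TT E S s) (Sst E S s) (sst E S s) = s.
Proof. by apply/ffunP=> mu; rewrite ffunE (t_second s Hg) sig2. Qed.
End Second.

Definition Theta (x : graph * (fS * fs)) : graph * (fS * fs) :=
  if good x.1 x.2.1 then (TT x.1 x.2.1 x.2.2, (Sst x.1 x.2.1 x.2.2, sst x.1 x.2.1 x.2.2))
  else x.

Lemma good_Theta x : good (Theta x).1 (Theta x).2.1 = good x.1 x.2.1.
Proof.
rewrite /Theta; case: x => E [S s] /=; case h: (good E S) => //=.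
exact: Sst_good.
Qed.

Lemma ThetaK : involutive Theta.
Proof.
case=> E [S s]; rewrite /Theta /=; case h: (good E S) => /=; last by rewrite h.
by rewrite (Sst_good s h) T_second // Sst2 // sst2.
Qed.

Lemma Theta_fst x : good x.1 x.2.1 -> (Theta x).1 = TT x.1 x.2.1 x.2.2.
Proof. by rewrite /Theta => ->. Qed.
End Main.

Section Count.
Variables (V : finType) (v1 : V) (d : nat).
Variable eE : {set {set V}} -> 'I_d -> {set V}.
Hypothesis heE : edge_enum_ok v1 eE.
Notation graph := {set {set V}}.

Lemma handshake (E : graph) : regular d E -> #|E| * 2 = #|V| * d.
Proof.
move=> rE.
have h1 : \sum_(v : V) #|[set e in E | v \in e]| = #|V| * d.
  by rewrite (eq_bigr (fun _ => d)) ?sum_nat_const // => v _; apply: reg_deg.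
rewrite -h1.
have h2 : forall v, #|[set e in E | v \in e]| = \sum_(e : {set V}) ((e \in E) * (v \in e)).
  by move=> v; rewrite (card_sumb [set e in E | v \in e]); apply: eq_bigr => e _; rewrite inE mulnb.
rewrite (eq_bigr (fun v => \sum_(e : {set V}) ((e \in E) * (v \in e)))); last by move=> v _; apply: h2.
rewrite exchange_big /=.
rewrite (card_sumb E) big_distrl /=; apply/esym; apply: eq_bigr => e _.
case eE': (e \in E) => /=; last by rewrite mul0n big1 // => i _; rewrite mul0n.
rewrite [RHS]mul1n -(reg_edge rE eE') (card_sumb e).
by apply: eq_bigr => i _; rewrite mul1n.
Qed.

Lemma card_Sset (E : graph) mu : regular d E ->
  #|Sset v1 eE E mu| = 'C(#|E| - d, 2).
Proof.
move=> rE; set e0 := eE E mu; set E' := [set e in E | v1 \notin e].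
have /andP[e0E v1e0] := eE_in heE mu rE.
have hE' : #|E'| = #|E| - d.
  rewrite -(reg_deg v1 rE) -(cardsID [set e : {set V} | v1 \in e] E).
  have -> : E :&: [set e : {set V} | v1 \in e] = [set e in E | v1 \in e].
    by apply/setP=> e; rewrite !inE.
  have -> : E :\: [set e : {set V} | v1 \in e] = E'.
    by apply/setP=> e; rewrite !inE andbC.
  by rewrite addKn.
have -> : Sset v1 eE E mu =
    (fun P => e0 |: P) @: [set P : {set {set V}} | P \subset E' & #|P| == 2].
  apply/setP=> S; rewrite inE; apply/idP/imsetP.
    move=> /and4P[sub c3 eS hf]; exists (S :\ e0); last by rewrite setD1K.
    rewrite inE; apply/andP; split.
      apply/subsetP=> e; rewrite !inE => /andP[ne eS'].
      rewrite (subsetP sub) //=.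
      exact: (implyP (implyP (forallP hf e) eS') ne).
    by move: c3; rewrite (cardsD1 e0) eS add1n eqSS.
  move=> [P]; rewrite inE => /andP[sub c2] ->.
  have e0P : e0 \notin P by apply/negP=> /(subsetP sub); rewrite inE v1e0 andbF.
  apply/and4P; split.
  - apply/subsetP=> e; rewrite in_setU1 => /orP[/eqP -> //|/(subsetP sub)].
    by rewrite inE => /andP[].
  - by rewrite cardsU1 e0P (eqP c2).
  - by rewrite setU11.
  - apply/forallP=> e; apply/implyP; rewrite in_setU1 => /orP[/eqP -> |eP].
      by rewrite eqxx.
    by apply/implyP=> _; move: (subsetP sub e eP); rewrite inE => /andP[].
rewrite card_in_imset; first by rewrite cards_draws hE'.
move=> P Q; rewrite !inE => /andP[sP _] /andP[sQ _] h.
have nP : e0 \notin P by apply/negP=> /(subsetP sP); rewrite inE v1e0 andbF.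
have nQ : e0 \notin Q by apply/negP=> /(subsetP sQ); rewrite inE v1e0 andbF.
by rewrite -(setU1K nP) -(setU1K nQ) h.
Qed.


Lemma card_fam (T : finType) (A : 'I_d -> {set T}) :
  #|[set S : {ffun 'I_d -> T} | [forall mu, S mu \in A mu]]| = \prod_(mu : 'I_d) #|A mu|.
Proof.
rewrite (eq_card (B := family A)); last first.
  by move=> S; rewrite inE; apply/forallP/familyP.
rewrite card_family foldrE big_map /=.
by rewrite /image_mem big_enum_cond.
Qed.

Variable Mt : {set {set V}} -> 'I_8 -> {set {set V}}.
Hypothesis hMt : matching_enum_ok Mt.
Notation fS := {ffun 'I_d -> graph}.
Notation fs := {ffun 'I_d -> 'I_8}.

Lemma pairing (f : graph -> fS -> fs -> nat) :
  \sum_(E in reg_graphs V d) \sum_(S : fS | [forall mu, S mu \in Sset v1 eE E mu])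
     \sum_(s : fs) f E S s =
  \sum_(x | good v1 eE x.1 x.2.1) f x.1 x.2.1 x.2.2.
Proof.
under eq_bigr => E _ do rewrite (pair_big (fun S : fS => [forall mu, S mu \in Sset v1 eE E mu]) (fun _ => true)).
rewrite (pair_big_dep (fun E => E \in reg_graphs V d)
   (fun E (p : fS * fs) => [forall mu, p.1 mu \in Sset v1 eE E mu] && true) (fun E (p : fS * fs) => f E p.1 p.2)) /=.
by apply: eq_bigl => x; rewrite inE andbT.
Qed.

Theorem main (hG : exists E : graph, regular d E)
  (hS : forall (E : graph) (mu : 'I_d), regular d E -> Sset v1 eE E mu != set0)
  (F : graph) :
  prob_T v1 eE Mt F = (if regular d F then (#|reg_graphs V d|%:R)^-1 else 0)%R.
Proof.
have [E0 rE0] := hG.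
set K := 'C((#|V| * d) %/ 2 - d, 2).
have hK : forall E mu, regular d E -> #|Sset v1 eE E mu| = K.
  by move=> E mu rE; rewrite card_Sset // /K -(handshake rE) mulnK.
have hP : forall E, regular d E ->
    (\prod_(mu : 'I_d) (#|Sset v1 eE E mu|%:R : rat) = (K%:R)^+d)%R.
  move=> E rE; rewrite (eq_bigr (fun _ => K%:R%R)) ?prodr_const ?card_ord // => mu _.
  by rewrite hK.
have Kpos : (0 < K ^ d)%N.
  have : (0 < \prod_(mu : 'I_d) #|Sset v1 eE E0 mu|)%N.
    by apply: prodn_gt0 => mu; rewrite card_gt0 hS.
  by rewrite (eq_bigr (fun _ => K)) ?prod_nat_const ?card_ord // => mu _; apply: hK.
set k := ((#|reg_graphs V d|%:R)^-1 * ((K%:R)^+d)^-1 * ((8 ^ d)%N%:R)^-1 : rat)%R.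
have step1 : prob_T v1 eE Mt F = (k * (\sum_(E in reg_graphs V d)
    \sum_(S : fS | [forall mu, S mu \in Sset v1 eE E mu])
      \sum_(s : fs) ((Tfull v1 Mt E S s == F) : nat))%:R)%R.
  rewrite /prob_T natr_sum big_distrr; apply: eq_bigr => E; rewrite inE => rE.
  rewrite natr_sum big_distrr; apply: eq_bigr => S _.
  rewrite natr_sum big_distrr; apply: eq_bigr => s _.
  by rewrite hP.
have step2 : (\sum_(E in reg_graphs V d)
    \sum_(S : fS | [forall mu, S mu \in Sset v1 eE E mu])
      \sum_(s : fs) ((Tfull v1 Mt E S s == F) : nat)) =
    (if regular d F then K ^ d * 8 ^ d else 0)%N.
  rewrite pairing.
  rewrite (eq_bigr (fun x => ((Theta v1 eE Mt x).1 == F) : nat)); last first.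
    by move=> x gx; rewrite Theta_fst.
  rewrite (reindex_inj (inv_inj (ThetaK heE hMt))) /=.
  rewrite (eq_bigl (fun x => good v1 eE x.1 x.2.1)); last by move=> x; rewrite good_Theta.
  rewrite (eq_bigr (fun x => (x.1 == F) : nat)); last by move=> x _; rewrite (ThetaK heE hMt).
  rewrite -(pairing (fun E S s => (E == F) : nat)).
  case rF: (regular d F).
    rewrite (bigD1 F) ?inE //= [X in _ + X]big1 ?addn0.
      rewrite eqxx (eq_bigr (fun _ => 8 ^ d)); last first.
        by move=> S _; rewrite sum1_card card_ffun !card_ord.
      rewrite sum_nat_const; congr (_ * _).
      rewrite (eq_card (B := [set S : fS | [forall mu, S mu \in Sset v1 eE F mu]])); last first.
        by move=> S; rewrite inE.
      rewrite card_fam (eq_bigr (fun _ => K)) ?prod_nat_const ?card_ord // => mu _.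
      exact: hK.
    move=> E /andP[rE nE]; rewrite big1 // => S _; rewrite big1 // => s _.
    by rewrite (negbTE nE).
  rewrite big1 // => E; rewrite inE => rE; rewrite big1 // => S _; rewrite big1 // => s _.
  by case: eqP rE => // ->; rewrite rF.
rewrite step1 step2; case: (regular d F); last by rewrite mulr0.
have hX : ((K%:R)^+d != 0 :> rat)%R by rewrite -natrX pnatr_eq0 -lt0n.
have hY : ((8 ^ d)%N%:R != 0 :> rat)%R by rewrite pnatr_eq0 -lt0n expn_gt0.
rewrite /k natrM [X in (_ * X)%R]mulrC mulrA mulfVK // natrX mulfVK //.
Qed.
End Count.

Unset Implicit Arguments.
Set Strict Implicit.

(* vertices {1,...,N} are 'I_N, vertex 1 is the ordinal 0 *)
Theorem lemma6p1 (N d : nat) (hN : (0 < N)%N)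
  (eE : {set {set 'I_N}} -> 'I_d -> {set 'I_N})
  (Mt : {set {set 'I_N}} -> 'I_8 -> {set {set 'I_N}})
  (heE : edge_enum_ok (Ordinal hN) eE)
  (hMt : matching_enum_ok Mt)
  (hG : exists E : {set {set 'I_N}}, regular d E)
  (hS : forall (E : {set {set 'I_N}}) (mu : 'I_d),
          regular d E -> Sset (Ordinal hN) eE E mu != set0) :
  forall F : {set {set 'I_N}},
    prob_T (Ordinal hN) eE Mt F =
      (if regular d F then (#|reg_graphs 'I_N d|%:R)^-1 else 0)%R.
Proof.
move=> F; exact: (main heE hMt hG hS F).
Qed.
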